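(* Let $\lambda>0$, $\xi>0$, $v_2<v_1$ with either $v_2<0<v_1$ or $0<v_2<v_1$. Let $X(t)$ be the extended telegraph process driven by GCPs with parameter $\lambda$ (no resets) and $\tilde X(t)$ the same process subject to Poissonian resets to the origin at rate $\xi$, both started at the origin with velocity $v_j$, and let $E_j$ denote the corresponding conditional expectations. Define the mean-square distance $\Delta_j^\lambda(\xi,t):=E_j[\tilde X^2(t)]+E_j[X^2(t)]-2E_j[\tilde X(t)]\,E_j[X(t)]$. Then for $t\ge0$ and $j=1,2$, $$\Delta_j^\lambda(\xi,t)=E_j[X^2(t)]+A_j^\lambda(\xi,t),\qquad E_j[X^2(t)]=\frac{t^2[3v_j^2+\lambda t(v_1^2+v_1v_2+v_2^2)]}{3(1+\lambda t)},$$ where $$ \begin{aligned} A_j^\lambda(\xi,t)&=-te^{-\xi t}\Big[\frac{2v_j^2-v_1v_2-v_{3-j}^2}{3\lambda(1+\lambda t)}+\frac{2(v_1^2+v_1v_2+v_2^2)}{3\xi}+\frac{t(v_j-v_{3-j})[2v_j+\lambda t(v_1+v_2)]}{2(1+\lambda t)^2}\Big]\\ &\quad+(1-e^{-\xi t})\Big[\frac{2(v_1^2+v_1v_2+v_2^2)}{3\xi^2}+\frac{2v_j^2-v_1v_2-v_{3-j}^2}{3\lambda}\Big(\frac1\xi-\frac1\lambda\Big)-\frac{t(2v_j+\lambda t(v_1+v_2))}{2(1+\lambda t)}\Big(\frac{v_j-v_{3-j}}{\lambda}+\frac{v_1+v_2}{\xi}\Big)\Big]\\ &\quad+\frac{e^{\xi/\lambda}\xi}{\lambda^2}G_\xi(t)\Big[\frac{2v_j^2-v_1v_2-v_{3-j}^2}{3\lambda}+\frac{t(v_j-v_{3-j})(2v_j+\lambda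 t(v_1+v_2))}{2(1+\lambda t)}\Big], \end{aligned} $$ with $G_\xi(t)=\Gamma[0,\frac\xi\lambda,\frac\xi\lambda(1+\lambda t)]$.
   Context: GCP with intensity $\lambda>0$: a Poisson process whose rate is random, exponentially distributed with mean $\lambda$; increments satisfy $P\{\tilde N_\lambda(t+s)-\tilde N_\lambda(t)=k\}=\frac{1}{1+\lambda s}(\frac{\lambda s}{1+\lambda s})^k$. Process without resets $X(t)$: a particle starts at the origin with velocity $v_j$ ($v_1,v_2\ne0$, $v_2<v_1$), moves with velocity alternating between $v_1$ and $v_2$, the periods at velocity $v_1$ and at $v_2$ governed by two independent GCPs of intensity $\lambda$; its law given $V(0)=v_j$ has generalized density $p(x,t|v_j)=\frac{\delta(x-v_jt)}{1+\lambda t}+\mathbb 1_{\{v_2t<x<v_1t\}}\frac{\lambda}{(v_1-v_2)(1+\lambda t)}$ ($\delta$ Dirac delta), and it is known that $E_j[X(t)]=\frac{t[2v_j+\lambda t(v_1+v_2)]}{2(1+\lambda t)}$. Reset process $\tilde X(t)$: same dynamics but instantaneously reset to the origin at the epochs of an independent Poisson process of rate $\xi$, restarting afresh with velocity $v_j$; its density is $\tilde p(x,t|v_j)=e^{-\xi t}p(x,t|v_j)+\xi\int_0^te^{-\xi s}p(x,s|v_j)ds$. $\Gamma(a,z_0,z_1)=\int_{z_0}^{z_1}s^{a-1}e^{-s}ds$. *)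

(* Defs.v *)
From Stdlib Require Import Reals.
From Coquelicot Require Import Coquelicot.
Open Scope R_scope.

Definition vel (v1 v2 : R) (j : nat) : R := if Nat.eqb j 1 then v1 else v2.
Definition vel_other (v1 v2 : R) (j : nat) : R := if Nat.eqb j 1 then v2 else v1.

(* E_j[f(X(t))] for the process without resets: integral of f against the
   generalized density
   p(x,t|v_j) = delta(x - v_j t)/(1+lam t)
                + 1_{v2 t < x < v1 t} lam / ((v1-v2)(1+lam t)). *)
Definition EX (lam v1 v2 vj : R) (f : R -> R) (t : R) : R :=
  f (vj * t) / (1 + lam * t)
  + RInt (fun x => f x * (lam / ((v1 - v2) * (1 + lam * t)))) (v2 * t) (v1 * t).

(* E_j[f(X~(t))] for the reset process: integral of f against
   p~(x,t|v_j) = e^{-xi t} p(x,t|v_j) + xi int_0^t e^{-xi s} p(x,s|v_j) ds. *)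
Definition EXr (lam xi v1 v2 vj : R) (f : R -> R) (t : R) : R :=
  exp (- xi * t) * EX lam v1 v2 vj f t
  + xi * RInt (fun s => exp (- xi * s) * EX lam v1 v2 vj f s) 0 t.

Definition Delta_ms (lam xi v1 v2 : R) (j : nat) (t : R) : R :=
  let vj := vel v1 v2 j in
  EXr lam xi v1 v2 vj (fun x => x ^ 2) t + EX lam v1 v2 vj (fun x => x ^ 2) t
  - 2 * EXr lam xi v1 v2 vj (fun x => x) t * EX lam v1 v2 vj (fun x => x) t.

(* Incomplete gamma Gamma(a, z0, z1) = int_{z0}^{z1} s^{a-1} e^{-s} ds
   (used with z0 > 0, where Rpower is the genuine power). *)
Definition Gamma_inc (a z0 z1 : R) : R :=
  RInt (fun s => Rpower s (a - 1) * exp (- s)) z0 z1.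

Definition Gxi (lam xi t : R) : R :=
  Gamma_inc 0 (xi / lam) (xi / lam * (1 + lam * t)).

Definition A_fun (lam xi v1 v2 : R) (j : nat) (t : R) : R :=
  let vj := vel v1 v2 j in
  let vk := vel_other v1 v2 j in
  let S := v1 ^ 2 + v1 * v2 + v2 ^ 2 in
  let D := 2 * vj ^ 2 - v1 * v2 - vk ^ 2 in
  let L := 1 + lam * t in
  let B := 2 * vj + lam * t * (v1 + v2) in
  - t * exp (- xi * t) *
      (D / (3 * lam * L) + 2 * S / (3 * xi) + t * (vj - vk) * B / (2 * L ^ 2))
  + (1 - exp (- xi * t)) *
      (2 * S / (3 * xi ^ 2) + D / (3 * lam) * (1 / xi - 1 / lam)
       - t * B / (2 * L) * ((vj - vk) / lam + (v1 + v2) / xi))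
  + exp (xi / lam) * xi / lam ^ 2 * Gxi lam xi t *
      (D / (3 * lam) + t * (vj - vk) * B / (2 * L)).

(* Main.v *)
Require Import Defs.
From Stdlib Require Import Reals Lra.
From Coquelicot Require Import Coquelicot.
Open Scope R_scope.

Lemma Ipoly (xi a b c t : R) : 0 < xi ->
  RInt (fun s => exp (- xi * s) * (a * s ^ 2 + b * s + c)) 0 t =
  (- exp (- xi * t) * ((a * t ^ 2 + b * t + c) / xi + (2 * a * t + b) / xi ^ 2 + 2 * a / xi ^ 3))
  - (- exp (- xi * 0) * ((a * 0 ^ 2 + b * 0 + c) / xi + (2 * a * 0 + b) / xi ^ 2 + 2 * a / xi ^ 3)).
Proof.
  intros Hxi.
  apply is_RInt_unique.
  apply (is_RInt_derive (fun s => - exp (- xi * s) * ((a * s ^ 2 + b * s + c) / xi + (2 * a * s + b) / xi ^ 2 + 2 * a / xi ^ 3))).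
  - intros x _. auto_derive. auto. field. lra.
  - intros x _. apply (ex_derive_continuous (K:=R_AbsRing) (V:=R_NormedModule)). auto_derive. auto.
Qed.

Lemma Ilog (lam xi t : R) : 0 < lam -> 0 < xi -> 0 <= t ->
  RInt (fun s => exp (- xi * s) / (1 + lam * s)) 0 t = exp (xi / lam) / lam * Gxi lam xi t.
Proof.
  intros Hl Hx Ht.
  assert (Hq : 0 < xi / lam) by (apply Rdiv_lt_0_compat; lra).
  unfold Gxi, Gamma_inc.
  replace (xi / lam) with (xi * 0 + xi / lam) at 2 by ring.
  replace (xi / lam * (1 + lam * t)) with (xi * t + xi / lam) by (field; lra).
  rewrite <- RInt_comp_lin.
  2:{ apply ex_RInt_continuous. intros z Hz. apply (ex_derive_continuous (K:=R_AbsRing) (V:=R_NormedModule)).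
      unfold Rpower. auto_derive.
      assert (0 <= xi * t) by nra.
      rewrite Rmin_left in Hz by lra. lra. }
  match goal with |- _ = _ * RInt ?f _ _ => rewrite (RInt_ext f (fun y => scal (lam * exp (- (xi / lam))) (exp (- xi * y) / (1 + lam * y)))) end.
  2:{ intros x Hx'. rewrite Rmin_left in Hx' by lra. rewrite Rmax_right in Hx' by lra.
  unfold scal; simpl; unfold mult; simpl.
  assert (Hp : 0 < xi * x + xi / lam) by nra.
  replace (0 - 1) with (- (1)) by ring.
  rewrite Rpower_Ropp, Rpower_1 by exact Hp.
  replace (- (xi * x + xi / lam)) with (- xi * x + - (xi / lam)) by ring.
  rewrite exp_plus, (exp_Ropp (xi / lam)).
  assert (exp (xi / lam) > 0) by apply exp_pos.
  assert (0 < xi * x * lam) by (apply Rmult_lt_0_compat; [apply Rmult_lt_0_compat|]; lra). field. repeat split; apply Rgt_not_eq; nra. }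
  rewrite (RInt_scal (V:=R_CompleteNormedModule)).
  2:{ apply ex_RInt_continuous. intros z Hz. rewrite Rmin_left in Hz by lra.
      apply (ex_derive_continuous (K:=R_AbsRing) (V:=R_NormedModule)). auto_derive. nra. }
  unfold scal; simpl; unfold mult; simpl.
  rewrite (exp_Ropp (xi / lam)).
  assert (exp (xi / lam) > 0) by apply exp_pos.
  match goal with |- ?a = _ * (_ * ?b) => set (I := b) end. assert (HH : exp (xi / lam) / lam * (lam * / exp (xi / lam) * I) = I) by (field; lra). exact (eq_sym HH).
Qed.

Lemma Ikey (lam xi t a b c d : R) : 0 < lam -> 0 < xi -> 0 <= t ->
  RInt (fun s => exp (- xi * s) * (a * s ^ 2 + b * s + c + d / (1 + lam * s))) 0 t =
  (- exp (- xi * t) * ((a * t ^ 2 + b * t + c) / xi + (2 * a * t + b) / xi ^ 2 + 2 * a / xi ^ 3))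
  - (- exp (- xi * 0) * ((a * 0 ^ 2 + b * 0 + c) / xi + (2 * a * 0 + b) / xi ^ 2 + 2 * a / xi ^ 3))
  + d * (exp (xi / lam) / lam * Gxi lam xi t).
Proof.
  intros Hl Hx Ht.
  rewrite <- Ilog by assumption. rewrite <- Ipoly by assumption.
  rewrite (RInt_ext _ (fun s => plus (exp (- xi * s) * (a * s ^ 2 + b * s + c)) (scal d (exp (- xi * s) / (1 + lam * s))))).
  2:{ intros x Hx'. rewrite Rmin_left in Hx' by lra. rewrite Rmax_right in Hx' by lra.
      unfold plus, scal; simpl; unfold mult; simpl. field. apply Rgt_not_eq. nra. }
  rewrite (RInt_plus (V:=R_CompleteNormedModule)).
  - rewrite (RInt_scal (V:=R_CompleteNormedModule)). reflexivity.
    apply ex_RInt_continuous. intros z Hz. rewrite Rmin_left in Hz by lra.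
    apply (ex_derive_continuous (K:=R_AbsRing) (V:=R_NormedModule)). auto_derive; repeat split; apply Rgt_not_eq; nra.
  - apply ex_RInt_continuous. intros z Hz.
    apply (ex_derive_continuous (K:=R_AbsRing) (V:=R_NormedModule)). auto_derive. auto.
  - apply ex_RInt_continuous. intros z Hz. rewrite Rmin_left in Hz by lra.
    unfold scal; simpl; unfold mult; simpl.
    apply (ex_derive_continuous (K:=R_AbsRing) (V:=R_NormedModule)). auto_derive; repeat split; apply Rgt_not_eq; nra.
Qed.

Lemma Ilin (k a b : R) : RInt (fun x => x * k) a b = k * (b ^ 2 - a ^ 2) / 2.
Proof.
  apply is_RInt_unique.
  replace (k * (b ^ 2 - a ^ 2) / 2) with (minus (k * b ^ 2 / 2) (k * a ^ 2 / 2))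
    by (unfold minus, plus, opp; simpl; field).
  apply (is_RInt_derive (fun x => k * x ^ 2 / 2)).
  - intros x _. auto_derive. auto. field.
  - intros x _. apply (ex_derive_continuous (K:=R_AbsRing) (V:=R_NormedModule)). auto_derive. auto.
Qed.

Lemma Iquad (k a b : R) : RInt (fun x => x ^ 2 * k) a b = k * (b ^ 3 - a ^ 3) / 3.
Proof.
  apply is_RInt_unique.
  replace (k * (b ^ 3 - a ^ 3) / 3) with (minus (k * b ^ 3 / 3) (k * a ^ 3 / 3))
    by (unfold minus, plus, opp; simpl; field).
  apply (is_RInt_derive (fun x => k * x ^ 3 / 3)).
  - intros x _. auto_derive. auto. field.
  - intros x _. apply (ex_derive_continuous (K:=R_AbsRing) (V:=R_NormedModule)). auto_derive. auto.
Qed.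

Lemma EX1 lam v1 v2 vj s : 0 < lam -> v2 < v1 -> 0 <= s ->
  EX lam v1 v2 vj (fun x => x) s = s * (vj + lam * s * (v1 + v2) / 2) / (1 + lam * s).
Proof.
  intros. unfold EX. rewrite Ilin. field. split; apply Rgt_not_eq; nra.
Qed.

Lemma EX2 lam v1 v2 vj s : 0 < lam -> v2 < v1 -> 0 <= s ->
  EX lam v1 v2 vj (fun x => x ^ 2) s =
  s ^ 2 * (3 * vj ^ 2 + lam * s * (v1 ^ 2 + v1 * v2 + v2 ^ 2)) / (3 * (1 + lam * s)).
Proof.
  intros. unfold EX. rewrite Iquad. field. split; apply Rgt_not_eq; nra.
Qed.

Lemma EXr1 lam xi v1 v2 vj t : 0 < lam -> 0 < xi -> v2 < v1 -> 0 <= t ->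
  let m := (v1 + v2) / 2 in
  let a := 0 in let b := m in let c := (vj - m) / lam in let d := - ((vj - m) / lam) in
  EXr lam xi v1 v2 vj (fun x => x) t =
  exp (- xi * t) * (t * (vj + lam * t * (v1 + v2) / 2) / (1 + lam * t)) +
  xi * ((- exp (- xi * t) * ((a * t ^ 2 + b * t + c) / xi + (2 * a * t + b) / xi ^ 2 + 2 * a / xi ^ 3))
  - (- exp (- xi * 0) * ((a * 0 ^ 2 + b * 0 + c) / xi + (2 * a * 0 + b) / xi ^ 2 + 2 * a / xi ^ 3))
  + d * (exp (xi / lam) / lam * Gxi lam xi t)).
Proof.
  intros Hl Hx Hv Ht m a b c d. unfold EXr. rewrite EX1 by assumption.
  rewrite <- Ikey by assumption. f_equal. f_equal.
  apply RInt_ext. intros x Hx'. rewrite Rmin_left in Hx' by lra. rewrite Rmax_right in Hx' by lra.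
  rewrite EX1 by lra. unfold a, b, c, d, m. match goal with |- @eq _ ?a ?b => change (@eq R a b) end. field. split; apply Rgt_not_eq; nra.
Qed.

Lemma EXr2 lam xi v1 v2 vj t : 0 < lam -> 0 < xi -> v2 < v1 -> 0 <= t ->
  let S := v1 ^ 2 + v1 * v2 + v2 ^ 2 in
  let q := (3 * vj ^ 2 - S) / lam in
  let a := S / 3 in let b := q / 3 in let c := - (q / lam) / 3 in let d := q / lam / 3 in
  EXr lam xi v1 v2 vj (fun x => x ^ 2) t =
  exp (- xi * t) * (t ^ 2 * (3 * vj ^ 2 + lam * t * S) / (3 * (1 + lam * t))) +
  xi * ((- exp (- xi * t) * ((a * t ^ 2 + b * t + c) / xi + (2 * a * t + b) / xi ^ 2 + 2 * a / xi ^ 3))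
  - (- exp (- xi * 0) * ((a * 0 ^ 2 + b * 0 + c) / xi + (2 * a * 0 + b) / xi ^ 2 + 2 * a / xi ^ 3))
  + d * (exp (xi / lam) / lam * Gxi lam xi t)).
Proof.
  intros Hl Hx Hv Ht S q a b c d. unfold EXr. rewrite EX2 by assumption.
  rewrite <- Ikey by assumption. f_equal. f_equal.
  apply RInt_ext. intros x Hx'. rewrite Rmin_left in Hx' by lra. rewrite Rmax_right in Hx' by lra.
  rewrite EX2 by lra. unfold a, b, c, d, q, S. match goal with |- @eq _ ?a ?b => change (@eq R a b) end. field. split; apply Rgt_not_eq; nra.
Qed.

Theorem theorem6 (lam xi v1 v2 t : R) (j : nat) :
  0 < lam -> 0 < xi -> v2 < v1 ->
  ((v2 < 0 /\ 0 < v1) \/ 0 < v2) ->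
  (j = 1%nat \/ j = 2%nat) ->
  0 <= t ->
  Delta_ms lam xi v1 v2 j t
    = EX lam v1 v2 (vel v1 v2 j) (fun x => x ^ 2) t + A_fun lam xi v1 v2 j t
  /\ EX lam v1 v2 (vel v1 v2 j) (fun x => x ^ 2) t
    = t ^ 2 * (3 * (vel v1 v2 j) ^ 2 + lam * t * (v1 ^ 2 + v1 * v2 + v2 ^ 2))
      / (3 * (1 + lam * t)).
Proof.
  intros Hl Hx Hv _ Hj Ht.
  split; [| apply EX2; assumption].
  unfold Delta_ms, A_fun. cbv zeta.
  rewrite EXr1, EXr2, EX1, EX2 by assumption.
  replace (- xi * 0) with 0 by ring. rewrite exp_0.
  assert (0 < 1 + lam * t) by nra.
  destruct Hj as [-> | ->]; unfold vel, vel_other; simpl Nat.eqb; cbv iota;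
  field; repeat split; apply Rgt_not_eq; lra.
Qed.
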